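(* Let $(F,v)$ be a valued field, $\varphi=(V,q)$ a quadratic space over $F$, and $\alpha,\beta$ two $v$-norms on $V$ which are both compatible with $q$ of the same depth $\varepsilon$. Then the induced $\varepsilon$-shifted spaces $\widetilde\varphi_\alpha$ and $\widetilde\varphi_\beta$ over $\operatorname{gr}_v(F)$ are Witt equivalent (i.e. $(-\widetilde\varphi_\alpha)\perp\widetilde\varphi_\beta$ is metabolic).
   Context: $F$ has a valuation $v\colon F\to\Gamma\cup\{\infty\}$, $\Gamma$ divisible totally ordered abelian group; $\operatorname{gr}_v(F)=\bigoplus_\gamma F_{\ge\gamma}/F_{>\gamma}$. A $v$-norm on a finite-dimensional $F$-space $V$ is $\alpha\colon V\to\Gamma\cup\{\infty\}$ with $\alpha(x)=\infty\iff x=0$, $\alpha(\lambda x)=v(\lambda)+\alpha(x)$, $\alpha(x+y)\ge\min(\alpha(x),\alpha(y))$, admitting a basis $(e_i)$ with $\alpha(\sum\lambda_ie_i)=\min\alpha(\lambda_ie_i)$; $\operatorname{gr}_\alpha(V)=\bigoplus V_{\ge\gamma}/V_{>\gamma}$ and $\tilde x$ is the image of $x\ne0$ in degree $\alpha(x)$. $\alpha$ is compatible of depth $\varepsilon\ge0$ with $q$ (polar form $b_q$) if (a) $v(b_q(x,y))\ge\alpha(x)+\alpha(y)+\varepsilon$; (b) $v(q(x))\ge2\alpha(x)$; (c) every $x\ne0$ has $y\ne0$ with equality in (a). The induced space $\widetilde\varphi_\alpha=(\operatorname{gr}_\alpha(V),\tilde q_\alpha,\tilde b_\alpha)$ has $\tilde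 b_\alpha(\tilde x,\tilde y)=$ class of $b_q(x,y)$ in $F_{\ge\alpha(x)+\alpha(y)+\varepsilon}/F_{>\alpha(x)+\alpha(y)+\varepsilon}$ (bilinear extension), $\tilde q_\alpha(\tilde x)=$ class of $q(x)$ in $F_{\ge2\alpha(x)}/F_{>2\alpha(x)}$, extended additively if $\varepsilon>0$ and by $\tilde q_\alpha(\sum\tilde x_\gamma)=\sum\tilde q_\alpha(\tilde x_\gamma)+\sum_{\gamma<\delta}\tilde b_\alpha(\tilde x_\gamma,\tilde x_\delta)$ if $\varepsilon=0$. For such triples, $-(\mathsf V,q,b)=(\mathsf V,-q,-b)$, orthogonal sums are the obvious ones, and a triple is metabolic if it has a graded subspace $\mathsf L$ of half dimension with $q(\mathsf L)=0=b(\mathsf L,\mathsf L)$. *)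

(* Defs.v *)
From HB Require Import structures.
From mathcomp Require Import all_boot all_order all_algebra.
Set Implicit Arguments. Unset Strict Implicit. Unset Printing Implicit Defensive.
Import Order.TTheory GRing.Theory Num.Theory.
Local Open Scope ring_scope.

(* Γ ∪ {∞} is encoded as [option Γ], with [None] = ∞. *)
Section ValGroup.
Variable G : porderZmodType.

Definition oleq (a b : option G) : bool :=
  match a, b with
  | _, None => true
  | None, Some _ => false
  | Some x, Some y => x <= y
  end.

Definition oltn (a b : option G) : bool :=
  match a, b with
  | None, _ => false
  | Some _, None => true
  | Some x, Some y => x < y
  end.

Definition oadd (a b : option G) : option G :=
  match a, b with
  | Some x, Some y => Some (x + y)
  | _, _ => None
  end.

Definition omin (a b : option G) : option G := if oleq a b then a else b.

Definition is_divisible_tot_ord_group : Prop :=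
  (forall x y : G, (x <= y) || (y <= x)) /\
  (forall x y z : G, x <= y -> x + z <= y + z) /\
  (forall (x : G) (n : nat), (0 < n)%N -> exists y : G, y *+ n = x).
End ValGroup.

Section Valuation.
Variables (F : fieldType) (G : porderZmodType).

Definition is_valuation (v : F -> option G) : Prop :=
  (forall x, v x = None <-> x = 0) /\
  (forall x y, v (x * y) = oadd (v x) (v y)) /\
  (forall x y, oleq (omin (v x) (v y)) (v (x + y))).

Variable V : vectType F.

Definition polar (q : V -> F) (x y : V) : F := q (x + y) - q x - q y.

Definition is_quadratic_form (q : V -> F) : Prop :=
  (forall (l : F) x, q (l *: x) = l ^+ 2 * q x) /\
  (forall x y z, polar q (x + y) z = polar q x z + polar q y z) /\
  (forall (l : F) x y, polar q (l *: x) y = l * polar q x y).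

Variable v : F -> option G.

Definition is_vnorm (al : V -> option G) : Prop :=
  (forall x, al x = None <-> x = 0) /\
  (forall (l : F) x, al (l *: x) = oadd (v l) (al x)) /\
  (forall x y, oleq (omin (al x) (al y)) (al (x + y))) /\
  (exists e : (\dim (fullv : {vspace V})).-tuple V,
      basis_of fullv e /\
      forall l : 'I_(\dim (fullv : {vspace V})) -> F,
        al (\sum_i l i *: tnth e i) =
        \big[@omin G/None]_i al (l i *: tnth e i)).

Definition compatible (q : V -> F) (al : V -> option G) (eps : G) : Prop :=
  0 <= eps /\
  (forall x y, oleq (oadd (oadd (al x) (al y)) (Some eps)) (v (polar q x y))) /\
  (forall x, oleq (oadd (al x) (al x)) (v (q x))) /\
  (forall x, x != 0 -> exists2 y, y != 0 &
       v (polar q x y) = oadd (oadd (al x) (al y)) (Some eps)).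

(* The graded space gr_al(V) ⊕ gr_be(V) underlying (-phi_al) ⊥ phi_be.
   A homogeneous element of degree g is represented by a pair (x,y) with
   al x >= g, be y >= g; it is zero iff al x > g and be y > g. *)
Variables (al be : V -> option G).

Definition hom_rep (g : G) (z : V * V) : Prop :=
  oleq (Some g) (al z.1) /\ oleq (Some g) (be z.2).

Definition zero_rep (g : G) (z : V * V) : Prop :=
  oltn (Some g) (al z.1) /\ oltn (Some g) (be z.2).

(* A graded subspace L, given by its homogeneous components L g
   (as sets of representatives, saturated modulo the zero classes),
   closed under addition and under multiplication by homogeneous
   elements of gr_v(F) (a class of l in degree d, with v l >= d). *)
Definition graded_subspace (L : G -> V * V -> Prop) : Prop :=
  (forall g z, L g z -> hom_rep g z) /\
  (forall g z, zero_rep g z -> L g z) /\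
  (forall g z z', L g z -> L g z' -> L g (z.1 + z'.1, z.2 + z'.2)) /\
  (forall g d (l : F) z, oleq (Some d) (v l) -> L g z ->
        L (g + d) (l *: z.1, l *: z.2)).

Definition lincomb n (l : 'I_n -> F) (w : 'I_n -> V * V) : V * V :=
  (\sum_i l i *: (w i).1, \sum_i l i *: (w i).2).

(* L has dimension n over gr_v(F): it has a homogeneous basis
   (w_i of degree g_i) of size n. *)
Definition graded_dim (L : G -> V * V -> Prop) (n : nat) : Prop :=
  exists (gs : 'I_n -> G) (w : 'I_n -> V * V),
    (forall i, L (gs i) (w i)) /\
    (* spanning *)
    (forall g z, L g z -> exists l : 'I_n -> F,
        (forall i, oleq (Some (g - gs i)) (v (l i))) /\
        zero_rep g (z.1 - (lincomb l w).1, z.2 - (lincomb l w).2)) /\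
    (* linear independence (homogeneous relations) *)
    (forall g (l : 'I_n -> F),
        (forall i, oleq (Some (g - gs i)) (v (l i))) ->
        zero_rep g (lincomb l w) ->
        forall i, oltn (Some (g - gs i)) (v (l i))).

Definition metabolic_diff (q : V -> F) (eps : G) : Prop :=
  exists L : G -> V * V -> Prop,
    graded_subspace L /\
    (exists m, graded_dim hom_rep (m + m) /\ graded_dim L m) /\
    (* q~(L) = 0 : -q~_al(x) + q~_be(y) = 0 in degree 2g *)
    (forall g z, L g z -> oltn (Some (g + g)) (v (q z.2 - q z.1))) /\
    (* b~(L,L) = 0 : in degree g + d + eps *)
    (forall g d z z', L g z -> L d z' ->
        oltn (Some (g + d + eps)) (v (polar q z.2 z'.2 - polar q z.1 z'.1))).
End Valuation.

Definition witt_equivalent_induced (F : fieldType) (G : porderZmodType)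
  (V : vectType F) (v : F -> option G) (q : V -> F) (al be : V -> option G)
  (eps : G) : Prop := metabolic_diff v al be q eps.

(* Main.v *)
Require Import Defs.
From HB Require Import structures.
From mathcomp Require Import all_boot all_order all_algebra.
From mathcomp Require Import ring.
Set Implicit Arguments. Unset Strict Implicit. Unset Printing Implicit Defensive.
Import Order.TTheory GRing.Theory Num.Theory.
Local Open Scope ring_scope.

Section Idx.
Variable k : nat.
Definition wid (j : 'I_k) : 'I_k.+1 := widen_ord (leqnSn k) j.
Definition ext {R : Type} (a : 'I_k -> R) (y : R) : 'I_k.+1 -> R :=
  fun i => if unlift ord_max i is Some j then a j else y.

Lemma wid_lift (j : 'I_k) : wid j = lift ord_max j.
Proof. by apply: val_inj; rewrite /= /bump leqNgt ltn_ord. Qed.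

Lemma ext_max {R : Type} (a : 'I_k -> R) y : ext a y ord_max = y.
Proof. by rewrite /ext unlift_none. Qed.

Lemma ext_wid {R : Type} (a : 'I_k -> R) y j : ext a y (wid j) = a j.
Proof. by rewrite /ext wid_lift liftK. Qed.

Lemma forallS (P : 'I_k.+1 -> Prop) :
  (forall i, P i) <-> (forall j, P (wid j)) /\ P ord_max.
Proof.
split=> [H|[H1 H2] i]; first by split.
by case: (unliftP ord_max i) => [j ->|->] //; rewrite -wid_lift.
Qed.

Lemma sumS (W : nmodType) (f : 'I_k.+1 -> W) :
  \sum_i f i = \sum_(j < k) f (wid j) + f ord_max.
Proof. by rewrite big_ord_recr. Qed.
End Idx.

Lemma sumD1S (W : nmodType) N (S : {set 'I_N}) s0 (f : 'I_N -> W) :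
  s0 \in S -> \sum_(j in S) f j = f s0 + \sum_(j in S :\ s0) f j.
Proof.
move=> Hs; rewrite (bigD1 s0) //=; congr (_ + _); apply: eq_bigl => j.
by rewrite in_setD1 andbC.
Qed.

Lemma forallD1S N (S : {set 'I_N}) s0 (P : 'I_N -> Prop) :
  s0 \in S -> (forall j, j \in S -> P j) <-> P s0 /\ (forall j, j \in S :\ s0 -> P j).
Proof.
move=> Hs; split=> [H|[H1 H2] j Hj]; first by split=> [|j]; [apply: H|rewrite in_setD1 => /andP[_]; apply: H].
by case: (eqVneq j s0) => [->//|ne]; apply: H2; rewrite in_setD1 ne.
Qed.

Section Opt.
Variable G : porderZmodType.
Hypothesis Htot : forall x y : G, (x <= y) || (y <= x).
Hypothesis Hadd : forall x y z : G, x <= y -> x + z <= y + z.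

Lemma leD2r (x y z : G) : (x + z <= y + z) = (x <= y).
Proof.
apply/idP/idP; last exact: Hadd.
by move=> /(Hadd (-z)); rewrite !addrK.
Qed.

Lemma ltD2r (x y z : G) : (x + z < y + z) = (x < y).
Proof. by rewrite !lt_neqAle leD2r (inj_eq (addIr z)). Qed.

Lemma ltNge (x y : G) : (x < y) = ~~ (y <= x).
Proof.
apply/idP/idP; first by move=> /lt_geF ->.
move=> Hyx; rewrite lt_neqAle; have := Htot x y; rewrite (negbTE Hyx) orbF => ->.
by rewrite andbT; apply: contraNN Hyx => /eqP ->.
Qed.

Lemma leD (a b c d : G) : a <= b -> c <= d -> a + c <= b + d.
Proof.
move=> Hab Hcd; apply: (le_trans (Hadd c Hab)).
by rewrite ![b + _]addrC; exact: Hadd.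
Qed.

Lemma ltD_le (a b c d : G) : a < b -> c <= d -> a + c < b + d.
Proof.
move=> Hab Hcd; apply: (lt_le_trans (y := b + c)); first by rewrite ltD2r.
by rewrite ![b + _]addrC; exact: Hadd.
Qed.

Section OptL.
Implicit Types a b c d : option G.

Lemma oleq_refl a : oleq a a.
Proof. by case: a => //= x; rewrite lexx. Qed.

Lemma oleq_trans a b c : oleq a b -> oleq b c -> oleq a c.
Proof.
case: a; case: b; case: c => //= x y z; exact: le_trans.
Qed.

Lemma oleq_anti a b : oleq a b -> oleq b a -> a = b.
Proof.
case: a; case: b => //= x y H1 H2; congr Some; apply/eqP; rewrite eq_le H1 H2.
by [].
Qed.

Lemma oleq_total a b : oleq a b || oleq b a.
Proof. by case: a; case: b => //= x y; rewrite Htot. Qed.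

Lemma oltnNge a b : oltn a b = ~~ oleq b a.
Proof. by case: a; case: b => //= x y; rewrite ltNge. Qed.

Lemma oltnW a b : oltn a b -> oleq a b.
Proof. by rewrite oltnNge => H; case/orP: (oleq_total a b) => // H'; rewrite H' in H. Qed.

Lemma oltn_le_trans a b c : oltn a b -> oleq b c -> oltn a c.
Proof.
rewrite !oltnNge => H1 H2; apply: contraNN H1 => H3; exact: oleq_trans H2 H3.
Qed.

Lemma oleq_lt_trans a b c : oleq a b -> oltn b c -> oltn a c.
Proof.
rewrite !oltnNge => H1 H2; apply: contraNN H2 => H3; exact: oleq_trans H3 H1.
Qed.

Lemma oleq_min c a b : oleq c (omin a b) = oleq c a && oleq c b.
Proof.
rewrite /omin; case: ifP => Hab.
  apply/idP/andP => [H|[]//]; split=> //; exact: oleq_trans H Hab.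
have Hba : oleq b a by case/orP: (oleq_total a b); rewrite ?Hab.
apply/idP/andP => [H|[]//]; split=> //; exact: oleq_trans H Hba.
Qed.

Lemma oltn_min c a b : oltn c (omin a b) = oltn c a && oltn c b.
Proof.
rewrite /omin; case: ifP => Hab.
  apply/idP/andP => [H|[]//]; split=> //; exact: oltn_le_trans H Hab.
have Hba : oleq b a by case/orP: (oleq_total a b); rewrite ?Hab.
apply/idP/andP => [H|[]//]; split=> //; exact: oltn_le_trans H Hba.
Qed.

Lemma oleq_None a : oleq a None.
Proof. by case: a. Qed.

Lemma oleqNone a : oleq None a -> a = None.
Proof. by case: a. Qed.

Lemma oeqP a b : (forall c, oleq c a = oleq c b) -> a = b.
Proof.
move=> H; apply: oleq_anti; first by rewrite -H oleq_refl.
by rewrite H oleq_refl.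
Qed.

Lemma oleq_big_seq (I : eqType) (r : seq I) (P : pred I) (f : I -> option G) c :
  oleq c (\big[@omin G/None]_(i <- r | P i) f i) <-> (forall i, i \in r -> P i -> oleq c (f i)).
Proof.
elim: r => [|y r IH]; first by rewrite big_nil; split=> // _; exact: oleq_None.
rewrite big_cons; case: ifP => Py; [rewrite oleq_min|]; split.
- case/andP=> H1 /IH H2 i; rewrite inE => /orP[/eqP->//|]; exact: H2.
- move=> H; apply/andP; split; first exact: H (mem_head _ _) Py.
  by apply/IH => i ir; apply: H; rewrite inE ir orbT.
- move/IH => H i; rewrite inE => /orP[/eqP->|]; [by rewrite Py|exact: H].
- by move=> H; apply/IH => i ir; apply: H; rewrite inE ir orbT.
Qed.

Lemma oleq_bigP (I : finType) (P : pred I) (f : I -> option G) c :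
  oleq c (\big[@omin G/None]_(i | P i) f i) <-> (forall i, P i -> oleq c (f i)).
Proof.
have [H1 H2] := oleq_big_seq (index_enum I) P f c.
split=> H; first by move=> i Pi; apply: H1 => //; rewrite mem_index_enum.
by apply: H2 => i _; apply: H.
Qed.

Lemma oltn_big_seq (I : eqType) (r : seq I) (P : pred I) (f : I -> option G) g :
  oltn (Some g) (\big[@omin G/None]_(i <- r | P i) f i) <-> (forall i, i \in r -> P i -> oltn (Some g) (f i)).
Proof.
elim: r => [|y r IH]; first by rewrite big_nil.
rewrite big_cons; case: ifP => Py; [rewrite oltn_min|]; split.
- case/andP=> H1 /IH H2 i; rewrite inE => /orP[/eqP->//|]; exact: H2.
- move=> H; apply/andP; split; first exact: H (mem_head _ _) Py.
  by apply/IH => i ir; apply: H; rewrite inE ir orbT.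
- move/IH => H i; rewrite inE => /orP[/eqP->|]; [by rewrite Py|exact: H].
- by move=> H; apply/IH => i ir; apply: H; rewrite inE ir orbT.
Qed.

Lemma oltn_bigP (I : finType) (P : pred I) (f : I -> option G) g :
  oltn (Some g) (\big[@omin G/None]_(i | P i) f i) <-> (forall i, P i -> oltn (Some g) (f i)).
Proof.
have [H1 H2] := oltn_big_seq (index_enum I) P f g.
split=> H; first by move=> i Pi; apply: H1 => //; rewrite mem_index_enum.
by apply: H2 => i _; apply: H.
Qed.

Lemma ominE a b : omin a b = a \/ omin a b = b.
Proof. by rewrite /omin; case: ifP; [left|right]. Qed.

Lemma big_omin_attained (I : finType) (P : pred I) (f : I -> option G) (d : G) :
  \big[@omin G/None]_(i | P i) f i = Some d -> exists2 i, P i & f i = Some d.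
Proof.
elim: (index_enum I) => [|y r IH]; first by rewrite big_nil.
rewrite big_cons; case: ifP => Py; last exact: IH.
case: (ominE (f y) (\big[@omin G/None]_(j <- r | P j) f j)) => ->; first by move=> H; exists y.
exact: IH.
Qed.

Lemma omin_Nonel a : omin None a = a.
Proof. by case: a. Qed.

Lemma omin_Noner a : omin a None = a.
Proof. by case: a. Qed.

Lemma oaddC a b : oadd a b = oadd b a.
Proof. by case: a; case: b => //= x y; rewrite addrC. Qed.

Lemma oaddA a b c : oadd a (oadd b c) = oadd (oadd a b) c.
Proof. by case: a; case: b; case: c => //= x y z; rewrite addrA. Qed.

Lemma oleq_add2 a b c d : oleq a b -> oleq c d -> oleq (oadd a c) (oadd b d).
Proof.
case: a; case: b; case: c; case: d => //= *; exact: leD.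
Qed.

Lemma oltn_add (x y : G) b d : oltn (Some x) b -> oleq (Some y) d -> oltn (Some (x + y)) (oadd b d).
Proof.
case: b => //= b'; case: d => //= d' H1 H2; exact: ltD_le.
Qed.

Lemma oleq_add_lt (x y : G) b d : oleq (Some x) b -> oltn (Some y) d -> oltn (Some (x + y)) (oadd b d).
Proof.
move=> H1 H2; rewrite oaddC addrC; exact: oltn_add.
Qed.

Lemma oleq_addl2 (z : G) a b : oleq (oadd (Some z) a) (oadd (Some z) b) = oleq a b.
Proof. by case: a; case: b => //= x y; rewrite ![z + _]addrC leD2r. Qed.

Lemma oadd_min c a b : oadd c (omin a b) = omin (oadd c a) (oadd c b).
Proof.
case: c => [z|]; last by [].
by rewrite /omin oleq_addl2; case: ifP.
Qed.

Lemma oleq_subP (g h : G) a : oleq (Some (g - h)) a = oleq (Some g) (oadd a (Some h)).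
Proof. by case: a => //= x; rewrite -(leD2r _ _ h) subrK. Qed.

Lemma oltn_subP (g h : G) a : oltn (Some (g - h)) a = oltn (Some g) (oadd a (Some h)).
Proof. by case: a => //= x; rewrite -(ltD2r _ _ h) subrK. Qed.

Lemma oeq_iff a b : (forall c, oleq c a <-> oleq c b) -> a = b.
Proof. by move=> H; apply: oeqP => c; apply/idP/idP => /H. Qed.

Lemma big_omin_None (I : finType) (P : pred I) (f : I -> option G) :
  (forall i, P i -> f i = None) -> \big[@omin G/None]_(i | P i) f i = None.
Proof.
move=> H; apply: oleqNone; apply/oleq_bigP => i Pi; rewrite H //.
Qed.

Lemma omin_l a b : oleq (omin a b) a.
Proof. by have := oleq_refl (omin a b); rewrite oleq_min => /andP[]. Qed.
Lemma omin_r a b : oleq (omin a b) b.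
Proof. by have := oleq_refl (omin a b); rewrite oleq_min => /andP[]. Qed.

End OptL.

Section Ultra.
Variables (W : zmodType) (f : W -> option G).
Hypothesis Hu : forall x y, oleq (omin (f x) (f y)) (f (x + y)).
Hypothesis HN : forall x, f (- x) = f x.
Hypothesis H0 : f 0 = None.

Lemma ule_add c x y : oleq c (f x) -> oleq c (f y) -> oleq c (f (x + y)).
Proof. by move=> H1 H2; apply: oleq_trans (Hu x y); rewrite oleq_min H1 H2. Qed.

Lemma ult_add g x y : oltn (Some g) (f x) -> oltn (Some g) (f y) -> oltn (Some g) (f (x + y)).
Proof. by move=> H1 H2; apply: oltn_le_trans (Hu x y); rewrite oltn_min H1 H2. Qed.

Lemma ule_sub c x y : oleq c (f x) -> oleq c (f y) -> oleq c (f (x - y)).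
Proof. by move=> H1 H2; apply: ule_add; rewrite ?HN. Qed.

Lemma ult_sub g x y : oltn (Some g) (f x) -> oltn (Some g) (f y) -> oltn (Some g) (f (x - y)).
Proof. by move=> H1 H2; apply: ult_add; rewrite ?HN. Qed.

Lemma ule_sum (I : Type) (r : seq I) (P : pred I) (F : I -> W) c :
  (forall i, P i -> oleq c (f (F i))) -> oleq c (f (\sum_(i <- r | P i) F i)).
Proof.
move=> H; apply: (big_ind (fun x => oleq c (f x))) => //.
  by rewrite H0 oleq_None.
exact: ule_add.
Qed.

Lemma ult_sum (I : Type) (r : seq I) (P : pred I) (F : I -> W) g :
  (forall i, P i -> oltn (Some g) (f (F i))) -> oltn (Some g) (f (\sum_(i <- r | P i) F i)).
Proof.
move=> H; apply: (big_ind (fun x => oltn (Some g) (f x))) => //.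
  by rewrite H0.
exact: ult_add.
Qed.

Lemma ule_shift c Y p q : oleq c Y -> oleq Y (f q) -> oleq c (f (p + q)) = oleq c (f p).
Proof.
move=> H1 H2; have H3 := oleq_trans H1 H2.
apply/idP/idP => H.
  by rewrite -(addrK q p); apply: ule_sub.
exact: ule_add.
Qed.

End Ultra.


Section Val.
Variables (F : fieldType) (v : F -> option G).
Hypothesis Hv : is_valuation v.

Lemma v0 : v 0 = None.
Proof. by case: Hv => H _; apply/H. Qed.

Lemma vSome x : x != 0 -> exists g, v x = Some g.
Proof.
move=> Hx; case E: (v x) => [g|]; first by exists g.
by case: Hv => H _; move: (proj1 (H x) E) Hx => ->; rewrite eqxx.
Qed.

Lemma vM x y : v (x * y) = oadd (v x) (v y).
Proof. by case: Hv => _ [H _]. Qed.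

Lemma v1 : v 1 = Some 0.
Proof.
have [g Hg] := vSome (oner_neq0 F).
have := vM 1 1; rewrite mulr1 Hg /= => -[] /esym H.
by congr Some; apply: (@addrI _ g); rewrite addr0.
Qed.


Lemma vN1 : v (-1) = Some 0.
Proof.
have [h Hh] : exists h, v (-1) = Some h by apply: vSome; rewrite oppr_eq0 oner_neq0.
have := vM (-1) (-1); rewrite mulrNN mulr1 v1 Hh /= => -[] Hhh.
congr Some; apply/eqP; rewrite eq_le.
case/orP: (Htot h 0) => H.
  rewrite H /=; have := Hadd h H; rewrite add0r -Hhh => H'.
  by [].
have := Hadd h H; rewrite add0r -Hhh => ->; by rewrite H.
Qed.

Lemma vN x : v (- x) = v x.
Proof. by rewrite -mulN1r vM vN1; case: (v x) => //= g; rewrite add0r. Qed.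

Lemma vU x y : oleq (omin (v x) (v y)) (v (x + y)).
Proof. by case: Hv => _ [_ H]. Qed.

Lemma v_ule_add c x y : oleq c (v x) -> oleq c (v y) -> oleq c (v (x + y)).
Proof. exact: (ule_add vU). Qed.
Lemma v_ult_add g x y : oltn (Some g) (v x) -> oltn (Some g) (v y) -> oltn (Some g) (v (x + y)).
Proof. exact: (ult_add vU). Qed.
Lemma v_ult_sub g x y : oltn (Some g) (v x) -> oltn (Some g) (v y) -> oltn (Some g) (v (x - y)).
Proof. exact: (ult_sub vU vN). Qed.

Section Norm.
Variables (W : lmodType F) (mu : W -> option G).
Hypothesis Hm1 : forall x, mu x = None <-> x = 0.
Hypothesis Hm2 : forall l x, mu (l *: x) = oadd (v l) (mu x).
Hypothesis Hm3 : forall x y, oleq (omin (mu x) (mu y)) (mu (x + y)).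

Lemma mu0 : mu 0 = None.
Proof. exact/Hm1. Qed.

Lemma muN x : mu (- x) = mu x.
Proof. by rewrite -scaleN1r Hm2 vN1; case: (mu x) => //= g; rewrite add0r. Qed.

Lemma muSome x : x != 0 -> exists g, mu x = Some g.
Proof.
move=> Hx; case E: (mu x) => [g|]; first by exists g.
by move: (proj1 (Hm1 x) E) Hx => ->; rewrite eqxx.
Qed.

Lemma muZN l x : mu ((- l) *: x) = mu (l *: x).
Proof. by rewrite !Hm2 vN. Qed.

Lemma mu_ule_add c x y : oleq c (mu x) -> oleq c (mu y) -> oleq c (mu (x + y)).
Proof. exact: (ule_add Hm3). Qed.
Lemma mu_ult_add g x y : oltn (Some g) (mu x) -> oltn (Some g) (mu y) -> oltn (Some g) (mu (x + y)).
Proof. exact: (ult_add Hm3). Qed.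
Lemma mu_ule_sub c x y : oleq c (mu x) -> oleq c (mu y) -> oleq c (mu (x - y)).
Proof. exact: (ule_sub Hm3 muN). Qed.
Lemma mu_ult_sub g x y : oltn (Some g) (mu x) -> oltn (Some g) (mu y) -> oltn (Some g) (mu (x - y)).
Proof. exact: (ult_sub Hm3 muN). Qed.
Lemma mu_ule_sum (I : Type) (r : seq I) (P : pred I) (Fi : I -> W) c :
  (forall i, P i -> oleq c (mu (Fi i))) -> oleq c (mu (\sum_(i <- r | P i) Fi i)).
Proof. exact: (ule_sum Hm3 mu0). Qed.
Lemma mu_ule_shift c Y p q : oleq c Y -> oleq Y (mu q) -> oleq c (mu (p + q)) = oleq c (mu p).
Proof. exact: (ule_shift Hm3 muN). Qed.

Definition orth0 k (u : 'I_k -> W) := forall a : 'I_k -> F,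
  mu (\sum_i a i *: u i) = \big[@omin G/None]_i mu (a i *: u i).

Lemma mu_oppZ l x : mu (- (l *: x)) = mu (l *: x).
Proof. exact: muN. Qed.

Lemma orth0_wid k (u : 'I_k.+1 -> W) : orth0 u -> orth0 (fun j => u (wid j)).
Proof.
move=> Hu a; have := Hu (ext a 0); rewrite sumS ext_max scale0r addr0.
have -> : \sum_(j < k) ext a 0 (wid j) *: u (wid j) = \sum_j a j *: u (wid j).
  by apply: eq_bigr => j _; rewrite ext_wid.
move=> ->; apply: oeq_iff => c; split.
  move/oleq_bigP/forallS=> [H1 _]; apply/oleq_bigP => i _; have := H1 i.
  by rewrite ext_wid; apply.
move/oleq_bigP => H; apply/oleq_bigP/forallS; split.
  by move=> j _; rewrite ext_wid; apply: H.
by move=> _; rewrite ext_max scale0r mu0 oleq_None.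
Qed.

Section Stein.
Variables (N : nat) (b : 'I_N -> W).
Definition orth2 k (u : 'I_k -> W) (S : {set 'I_N}) := forall a c,
  mu (\sum_i a i *: u i + \sum_(j in S) c j *: b j) =
  omin (\big[@omin G/None]_i mu (a i *: u i)) (\big[@omin G/None]_(j in S) mu (c j *: b j)).
Definition span2 k (u : 'I_k -> W) (S : {set 'I_N}) := forall x, exists a c,
  x = \sum_i a i *: u i + \sum_(j in S) c j *: b j.
Hypothesis Hb_orth : orth0 b.
Hypothesis Hb_span : forall x, exists c, x = \sum_j c j *: b j.

Lemma orth2_S k (u : 'I_k -> W) S c : orth2 u S ->
  mu (\sum_(j in S) c j *: b j) = \big[@omin G/None]_(j in S) mu (c j *: b j).
Proof.
move=> H; have := H (fun _ => 0) c; rewrite big1 ?add0r; last by move=> i _; rewrite scale0r.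
move=> ->; rewrite big_omin_None ?omin_Nonel // => i _; by rewrite scale0r mu0.
Qed.

Lemma steinitz k : forall u : 'I_k -> W, (forall i, u i != 0) -> orth0 u ->
  exists S, orth2 u S /\ span2 u S.
Proof.
elim: k => [|k IH] u Hnz Hu.
  exists setT; split.
    move=> a c; rewrite !big_ord0 add0r omin_Nonel.
    have -> : \sum_(j in setT) c j *: b j = \sum_j c j *: b j by apply: eq_bigl => j; rewrite in_setT.
    have -> : \big[@omin G/None]_(j in setT) mu (c j *: b j) = \big[@omin G/None]_j mu (c j *: b j).
      by apply: eq_bigl => j; rewrite in_setT.
    exact: Hb_orth.
  move=> x; have [c ->] := Hb_span x; exists (fun _ => 0), c; rewrite big_ord0 add0r.
  by apply: eq_bigl => j; rewrite in_setT.
pose u' := fun j => u (wid j).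
have [S [HS1 HS2]] := IH u' (fun j => Hnz (wid j)) (orth0_wid Hu).
pose uk := u ord_max.
have [a' [c Huk]] := HS2 uk.
have [d Hd] := muSome (Hnz ord_max).
pose A := mu (\sum_j a' j *: u' j).
pose C := mu (\sum_(j in S) c j *: b j).
have HA : A = \big[@omin G/None]_j mu (a' j *: u' j) by apply: (orth0_wid Hu).
have HC : C = \big[@omin G/None]_(j in S) mu (c j *: b j) by apply: orth2_S HS1.
have E1 : mu uk = omin A C by rewrite Huk HS1 -HA -HC.
have E2 : C = omin A (mu uk).
  have := Hu (ext (fun j => - a' j) 1); rewrite sumS ext_max scale1r.
  have -> : \sum_(j < k) ext (fun j => - a' j) 1 (wid j) *: u (wid j) = - \sum_j a' j *: u' j.
    by rewrite -sumrN; apply: eq_bigr => j _; rewrite ext_wid scaleNr.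
  rewrite -/uk {1}Huk addrA addNr add0r -/C => ->.
  apply: oeq_iff => z; rewrite oleq_min; split.
    move/oleq_bigP/forallS => [H1 H2]; apply/andP; split; last by have := H2 isT; rewrite ext_max scale1r; apply.
    rewrite HA; apply/oleq_bigP => j _; have := H1 j isT; rewrite ext_wid muZN; apply.
  case/andP=> H1 H2; apply/oleq_bigP/forallS; split.
    move=> j _; rewrite ext_wid muZN; move: H1; rewrite HA => /oleq_bigP H; exact: H.
  by move=> _; rewrite ext_max scale1r.
have HkA : oleq (mu uk) A by rewrite E1 omin_l.
have HCd : C = Some d.
  rewrite E2 -Hd; apply: oleq_anti; first exact: omin_r.
  by rewrite oleq_min oleq_refl andbT.
have [s0 Hs0 Hcs0] : exists2 s0, s0 \in S & mu (c s0 *: b s0) = Some d.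
  by apply: big_omin_attained; rewrite -HC.
have Hcs0nz : c s0 != 0.
  by apply/eqP => E; move: Hcs0; rewrite E scale0r mu0.
have HAj : forall j, oleq (Some d) (mu (a' j *: u' j)).
  by move=> j; move: HkA; rewrite Hd HA => /oleq_bigP; apply.
have HCj : forall j, j \in S -> oleq (Some d) (mu (c j *: b j)).
  by move=> j; move: (oleq_refl C); rewrite {1}HCd HC => /oleq_bigP; apply.
exists (S :\ s0); split.
  move=> a c''; pose y := a ord_max.
  pose at' := fun j => a (wid j) + y * a' j.
  pose ct := fun j => if j == s0 then y * c j else c'' j + y * c j.
  have Esum : \sum_i a i *: u i + \sum_(j in S :\ s0) c'' j *: b j =
     \sum_j at' j *: u' j + \sum_(j in S) ct j *: b j.
    rewrite sumS -/y (sumD1S _ Hs0) /ct eqxx.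
    under [in RHS]eq_bigr do rewrite scalerDl -scalerA.
    under [X in _ = _ + (_ + X)]eq_bigr => j.
      rewrite in_setD1 => /andP[/negbTE -> _]; rewrite scalerDl -scalerA; over.
    rewrite !big_split /= -!scaler_sumr -/uk Huk (sumD1S _ Hs0) !scalerDr -scalerA.
    by rewrite !addrA [LHS]addrAC.
  rewrite Esum HS1; pose Y := oadd (v y) (Some d).
  have HY : mu (y *: uk) = Y by rewrite Hm2 Hd.
  apply: oeq_iff => z; rewrite !oleq_min; split.
    case/andP=> /oleq_bigP H1 /oleq_bigP /(forallD1S _ Hs0) [H2 H3].
    have HzY : oleq z Y by move: H2; rewrite /ct eqxx -scalerA Hm2 Hcs0.
    apply/andP; split.
      apply/oleq_bigP/forallS; split; last by move=> _; rewrite -/y -/uk HY.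
      move=> j _; have := H1 j isT; rewrite /at' scalerDl -scalerA.
      rewrite (mu_ule_shift (Y := Y)) //; rewrite Hm2 /Y; apply: oleq_add2 => //; exact: oleq_refl.
    apply/oleq_bigP => j Hj; have := H3 j Hj; move: Hj; rewrite in_setD1 => /andP[Hj Hj'].
    rewrite /ct (negbTE Hj) scalerDl -scalerA (mu_ule_shift (Y := Y)) //.
    rewrite Hm2 /Y; apply: oleq_add2; [exact: oleq_refl|exact: HCj].
  case/andP=> /oleq_bigP/forallS [H1 H2] /oleq_bigP H3.
  have HzY : oleq z Y by have := H2 isT; rewrite -/y -/uk HY.
  apply/andP; split.
    apply/oleq_bigP => j _; rewrite /at' scalerDl -scalerA (mu_ule_shift (Y := Y)) //.
      exact: H1.
    rewrite Hm2 /Y; apply: oleq_add2 => //; exact: oleq_refl.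
  apply/oleq_bigP/(forallD1S _ Hs0); split.
    by rewrite /ct eqxx -scalerA Hm2 Hcs0.
  move=> j Hj; move: (Hj); rewrite in_setD1 => /andP[Hj1 Hj2].
  rewrite /ct (negbTE Hj1) scalerDl -scalerA (mu_ule_shift (Y := Y)) //; first exact: H3.
  rewrite Hm2 /Y; apply: oleq_add2; [exact: oleq_refl|exact: HCj].
move=> x; have [a [c' ->]] := HS2 x.
pose l := c' s0 / c s0.
exists (ext (fun j => a j - l * a' j) l), (fun j => c' j - l * c j).
rewrite sumS ext_max.
have -> : \sum_(j < k) ext (fun j => a j - l * a' j) l (wid j) *: u (wid j) =
    \sum_j a j *: u' j - l *: \sum_j a' j *: u' j.
  by rewrite scaler_sumr -sumrB; apply: eq_bigr => j _; rewrite ext_wid scalerBl scalerA.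
have -> : \sum_(j in S :\ s0) (c' j - l * c j) *: b j =
    \sum_(j in S :\ s0) c' j *: b j - l *: \sum_(j in S :\ s0) c j *: b j.
  by rewrite scaler_sumr -sumrB; apply: eq_bigr => j _; rewrite scalerBl scalerA.
rewrite -/uk Huk (sumD1S _ Hs0) (sumD1S _ Hs0) !scalerDr scalerA /l divfK //.
set P1 := \sum_j a j *: u' j. set Q := l *: \sum_j a' j *: u' j.
set R := l *: \sum_(j in S :\ s0) c j *: b j. set T := \sum_(j in S :\ s0) c' j *: b j.
set B := c' s0 *: b s0.
by rewrite (addrA (P1 - Q)) subrK -addrA addrACA subrr addr0.
Qed.
End Stein.

End Norm.

Lemma forall_split m n (P : 'I_(m + n) -> Prop) :
  (forall i, P i) <-> (forall j, P (lshift n j)) /\ (forall j, P (rshift m j)).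
Proof.
split=> [H|[H1 H2] i]; first by split.
case: (splitP i) => j Hj.
  by have -> : i = lshift n j by apply: val_inj.
by have -> : i = rshift m j by apply: val_inj.
Qed.

Lemma omin_None (a b : option G) : omin a b = None -> a = None /\ b = None.
Proof.
move=> H; have : oleq None (omin a b) by rewrite H.
by rewrite oleq_min => /andP[/oleqNone -> /oleqNone ->].
Qed.

Section Pair.
Variables (V : vectType F) (al be : V -> option G).
Hypotheses (Hal : is_vnorm v al) (Hbe : is_vnorm v be).

Lemma vn1 (a : V -> option G) : is_vnorm v a -> forall x, a x = None <-> x = 0.
Proof. by case. Qed.
Lemma vn2 (a : V -> option G) : is_vnorm v a -> forall l x, a (l *: x) = oadd (v l) (a x).
Proof. by case=> _ []. Qed.
Lemma vn3 (a : V -> option G) : is_vnorm v a -> forall x y, oleq (omin (a x) (a y)) (a (x + y)).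
Proof. by case=> _ [_ []]. Qed.

Definition pmu (z : V * V) : option G := omin (al z.1) (be z.2).
Definition gam (t : V) := pmu (t, t).

Lemma pairE2 (z w : V * V) : z.1 = w.1 -> z.2 = w.2 -> z = w.
Proof. by move: z w => [? ?] [? ?] /= -> ->. Qed.

Lemma fst_sum (I : Type) (r : seq I) (P : pred I) (f : I -> V * V) :
  (\sum_(i <- r | P i) f i).1 = \sum_(i <- r | P i) (f i).1.
Proof. exact: (big_morph fst). Qed.
Lemma snd_sum (I : Type) (r : seq I) (P : pred I) (f : I -> V * V) :
  (\sum_(i <- r | P i) f i).2 = \sum_(i <- r | P i) (f i).2.
Proof. exact: (big_morph snd). Qed.

Lemma pm1 z : pmu z = None <-> z = 0.
Proof.
split=> [/omin_None [/(vn1 Hal) H1 /(vn1 Hbe) H2]|->]; first by apply: pairE2.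
by rewrite /pmu /= (proj2 (vn1 Hal 0)) // (proj2 (vn1 Hbe 0)).
Qed.

Lemma pm2 l z : pmu (l *: z) = oadd (v l) (pmu z).
Proof. by rewrite /pmu /= (vn2 Hal) (vn2 Hbe) oadd_min. Qed.

Lemma pm3 x y : oleq (omin (pmu x) (pmu y)) (pmu (x + y)).
Proof.
rewrite /pmu /= oleq_min; apply/andP; split.
  apply: (ule_add (vn3 Hal)).
    exact: oleq_trans (omin_l _ _) (omin_l _ _).
  exact: oleq_trans (omin_r _ _) (omin_l _ _).
apply: (ule_add (vn3 Hbe)).
  exact: oleq_trans (omin_l _ _) (omin_r _ _).
exact: oleq_trans (omin_r _ _) (omin_r _ _).
Qed.

Let n := \dim (fullv : {vspace V}).

Lemma pair_basis' : exists bb : 'I_(n + n) -> V * V,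
  orth0 pmu bb /\ (forall z, exists c, z = \sum_j c j *: bb j) /\ forall i, bb i != 0.
Proof.
case: Hal => _ [_ [_ [e [He Hes]]]]; case: Hbe => _ [_ [_ [f [Hf Hfs]]]].
pose bb := fun i : 'I_(n + n) => match split i with inl j => (tnth e j, 0) | inr j => (0, tnth f j) end.
have Hl : forall j, bb (lshift n j) = (tnth e j, 0).
  by move=> j; rewrite /bb -[lshift n j]/(unsplit (inl j)) unsplitK.
have Hr : forall j, bb (rshift n j) = (0, tnth f j).
  by move=> j; rewrite /bb -[rshift n j]/(@unsplit n n (inr j)) unsplitK.
exists bb; split; [|split].
  move=> c; rewrite /pmu fst_sum snd_sum !big_split_ord /=.
  under eq_bigr do rewrite Hl /=.
  under [X in al (_ + X)]eq_bigr do rewrite Hr /= scaler0.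
  under [X in be (X + _)]eq_bigr do rewrite Hl /= scaler0.
  under [X in be (_ + X)]eq_bigr do rewrite Hr /=.
  rewrite !big1_eq addr0 add0r Hes Hfs; apply: oeq_iff => z; rewrite oleq_min.
  split.
    case/andP => /oleq_bigP H1 /oleq_bigP H2; apply/oleq_bigP => i _.
    move: i; apply/forall_split; split=> j.
      rewrite Hl /pmu /= scaler0 (proj2 (vn1 Hbe 0)) // omin_Noner; exact: H1.
    rewrite Hr /pmu /= scaler0 (proj2 (vn1 Hal 0)) // omin_Nonel; exact: H2.
  move/oleq_bigP => H; apply/andP; split; apply/oleq_bigP => j _.
    have := H (lshift n j) isT; rewrite Hl /pmu /= scaler0 (proj2 (vn1 Hbe 0)) // omin_Noner //.
  have := H (rshift n j) isT; rewrite Hr /pmu /= scaler0 (proj2 (vn1 Hal 0)) // omin_Nonel //.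
move=> z.
exists (fun i => match split i with inl j => coord e j z.1 | inr j => coord f j z.2 end).
rewrite big_split_ord /=.
under eq_bigr do rewrite Hl -[lshift n _]/(unsplit (inl _)) unsplitK /=.
under [X in _ = _ + X]eq_bigr do rewrite Hr -[rshift n _]/(@unsplit n n (inr _)) unsplitK /=.
apply: pairE2; [rewrite /= !fst_sum /= | rewrite /= !snd_sum /=].
  rewrite [X in _ = _ + X]big1 => [|j _]; last by rewrite scaler0.
  rewrite addr0 {1}(coord_basis He (memvf z.1)); apply: eq_bigr => j _.
  by rewrite (tnth_nth 0).
rewrite [X in _ = X + _]big1 => [|j _]; last by rewrite scaler0.
rewrite add0r {1}(coord_basis Hf (memvf z.2)); apply: eq_bigr => j _.
by rewrite (tnth_nth 0).
apply/forall_split; split=> j; [rewrite Hl|rewrite Hr].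
  by apply: contraNneq (basis_not0 He (mem_tnth j e)) => /(congr1 fst) /= ->.
by apply: contraNneq (basis_not0 Hf (mem_tnth j f)) => /(congr1 snd) /= ->.
Qed.

Lemma pair_basis : exists bb : 'I_(n + n) -> V * V,
  orth0 pmu bb /\ forall z, exists c, z = \sum_j c j *: bb j.
Proof.
have [bb [H1 [H2 _]]] := pair_basis'. by exists bb.
Qed.

Lemma pair_sum_diag k (a : 'I_k -> F) (t : 'I_k -> V) :
  \sum_i a i *: (t i, t i) = (\sum_i a i *: t i, \sum_i a i *: t i).
Proof. by apply: pairE2; rewrite ?fst_sum ?snd_sum. Qed.

Lemma orth0_diag k (t : 'I_k -> V) : orth0 gam t -> orth0 pmu (fun i => (t i, t i)).
Proof. by move=> Ht a; rewrite pair_sum_diag; apply: Ht. Qed.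

Lemma gam1 x : gam x = None <-> x = 0.
Proof. by rewrite /gam; split=> [/pm1/(congr1 fst)|->] //; apply/pm1. Qed.

Lemma diag_orth k : (k <= n)%N -> exists t : 'I_k -> V, (forall i, t i != 0) /\ orth0 gam t.
Proof.
elim: k => [|k IH] Hk.
  exists (fun _ => 0); split; first by case.
  by move=> a; rewrite !big_ord0; apply/gam1.
have [t [Htnz Ht]] := IH (ltnW Hk).
pose T := [tuple t i | i < k].
have /allPn [x _ Hx] : ~~ all (fun x => x \in <<T>>%VS) (vbasis fullv).
  apply/negP => /allP /span_subvP; rewrite (span_basis (vbasisP fullv)) => /dimvS.
  move=> H; have := leq_trans H (dim_span T); rewrite size_tuple -/n => Hnk.
  by move: (leq_trans Hk Hnk); rewrite ltnn.
have [bb [Hbb1 Hbb2]] := pair_basis.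
have Hunz : forall i, (t i, t i) != 0.
  by move=> i; apply: contraNneq (Htnz i) => /(congr1 fst) /= ->.
have [S [HS1 HS2]] := steinitz pm1 pm2 pm3 Hbb1 Hbb2 Hunz (orth0_diag Ht).
have [a [c Hxx]] := HS2 (x, x).
rewrite pair_sum_diag in Hxx.
pose x' := x - \sum_i a i *: t i.
have Hx' : (x', x') = \sum_(j in S) c j *: bb j.
  by rewrite /x' -[(_ - _, _ - _)]/((x, x) - (\sum_i a i *: t i, \sum_i a i *: t i)) Hxx addrC addKr.
have Hx'nz : x' != 0.
  apply: contraNneq Hx => /eqP; rewrite subr_eq0 => /eqP ->.
  apply: memv_suml => i _; apply: memvZ; apply: memv_span.
  by rewrite -(tnth_mktuple t i) mem_tnth.
exists (ext t x'); split.
  by apply/forallS; split=> [j|]; rewrite ?ext_wid ?ext_max.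
move=> a'; pose y := a' ord_max.
have Esum : \sum_i a' i *: ext t x' i = \sum_j a' (wid j) *: t j + y *: x'.
  rewrite sumS ext_max; congr (_ + _); apply: eq_bigr => j _; by rewrite ext_wid.
have Ey : (y *: x', y *: x') = \sum_(j in S) (y * c j) *: bb j.
  rewrite -[(y *: x', _)]/(y *: (x', x')) Hx' scaler_sumr; apply: eq_bigr => j _.
  by rewrite scalerA.
have E1 : gam (\sum_i a' i *: ext t x' i) =
    omin (\big[@omin G/None]_j pmu (a' (wid j) *: (t j, t j)))
         (\big[@omin G/None]_(j in S) pmu ((y * c j) *: bb j)).
  rewrite -HS1 Esum /gam -Ey; congr pmu; apply: pairE2; by rewrite /= ?fst_sum ?snd_sum.
have E2 : gam (y *: x') = \big[@omin G/None]_(j in S) pmu ((y * c j) *: bb j).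
  by rewrite -(orth2_S pm1 _ HS1) -Ey.
rewrite E1 -E2; apply: oeq_iff => z; rewrite oleq_min; split.
  case/andP=> /oleq_bigP H1 H2; apply/oleq_bigP => i _; move: i; apply/forallS; split.
    by move=> j; rewrite ext_wid; apply: H1.
  by rewrite ext_max.
move/oleq_bigP => H; apply/andP; split.
  by apply/oleq_bigP => j _; have := H (wid j) isT; rewrite ext_wid.
by have := H ord_max isT; rewrite ext_max.
Qed.

Lemma diag_basis : exists t : 'I_n -> V,
  (forall i, t i != 0) /\ orth0 gam t /\ forall x, exists l, x = \sum_i l i *: t i.
Proof.
have [t [Htnz Ht]] := diag_orth (leqnn n).
exists t; split=> //; split=> // x.
pose T := [tuple t i | i < n].
have HT : free T.
  apply/freeP => l Hl i.
  have Hl' : \sum_i l i *: t i = 0.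
    by rewrite -[RHS]Hl; apply: eq_bigr => j _; rewrite nth_mktuple.
  have : oleq None (gam (\sum_i l i *: t i)) by rewrite Hl' (proj2 (gam1 0)).
  rewrite Ht => /oleq_bigP /(_ i isT) /oleqNone /gam1 /eqP.
  by rewrite scaler_eq0 (negbTE (Htnz i)) orbF => /eqP.
have HB : basis_of fullv T by rewrite basisEfree HT subvf size_tuple leqnn.
exists (fun i => coord T i x); rewrite {1}(coord_basis HB (memvf x)).
by apply: eq_bigr => i _; rewrite nth_mktuple.
Qed.

Lemma hom_repE g z : hom_rep al be g z <-> oleq (Some g) (pmu z).
Proof. by rewrite /hom_rep /pmu oleq_min; split=> [[-> ->]|/andP[]]. Qed.

Lemma zero_repE g z : zero_rep al be g z <-> oltn (Some g) (pmu z).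
Proof. by rewrite /zero_rep /pmu oltn_min; split=> [[-> ->]|/andP[]]. Qed.

Lemma lincombE k (l : 'I_k -> F) (w : 'I_k -> V * V) : lincomb l w = \sum_i l i *: w i.
Proof. by apply: pairE2; rewrite /lincomb /= ?fst_sum ?snd_sum. Qed.

Definition Lw k (w : 'I_k -> V * V) (g : G) (z : V * V) : Prop :=
  oleq (Some g) (pmu z) /\ exists l : 'I_k -> F,
    oleq (Some g) (pmu (\sum_i l i *: w i)) /\ oltn (Some g) (pmu (z - \sum_i l i *: w i)).

Lemma GD k (w : 'I_k -> V * V) (L : G -> V * V -> Prop) :
  (forall i, w i != 0) -> orth0 pmu w -> (forall g z, L g z <-> Lw w g z) ->
  graded_dim v al be L k.
Proof.
move=> Hnz Hw HL.
pose gs i := odflt 0 (pmu (w i)).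
have Hgs : forall i, pmu (w i) = Some (gs i).
  by move=> i; have [g Hg] := muSome pm1 (Hnz i); rewrite /gs Hg.
exists gs, w; split; [|split].
- move=> i; apply/HL; split; first by rewrite Hgs /= lexx.
  exists (fun j => (j == i)%:R).
  have -> : \sum_j (j == i)%:R *: w j = w i.
    rewrite (bigD1 i) //= eqxx scale1r big1 ?addr0 // => j /negbTE ->.
    by rewrite scale0r.
  by rewrite Hgs /= lexx subrr (proj2 (pm1 0)).
- move=> g z /HL [Hz [l [H1 H2]]]; exists l; split.
    move=> i; rewrite oleq_subP -Hgs -pm2; move: H1; rewrite Hw => /oleq_bigP H.
    exact: H.
  by apply/zero_repE; rewrite lincombE.
- move=> g l _ /zero_repE; rewrite lincombE Hw => /oltn_bigP H i.
  by rewrite oltn_subP -Hgs -pm2; apply: H.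
Qed.

Lemma GS k (w : 'I_k -> V * V) : graded_subspace v al be (Lw w).
Proof.
split; [|split; [|split]].
- by move=> g z [Hz _]; apply/hom_repE.
- move=> g z /zero_repE Hz; split; first exact: oltnW.
  exists (fun _ => 0); rewrite big1 ?subr0; last by move=> i _; rewrite scale0r.
  by rewrite (proj2 (pm1 0)).
- move=> g z z' [Hz [l [H1 H2]]] [Hz' [l' [H1' H2']]]; split.
    exact: (ule_add pm3).
  exists (fun i => l i + l' i).
  have -> : \sum_i (l i + l' i) *: w i = \sum_i l i *: w i + \sum_i l' i *: w i.
    by rewrite -big_split; apply: eq_bigr => i _; rewrite scalerDl.
  split; first exact: (ule_add pm3).
  rewrite -[(z.1 + z'.1, z.2 + z'.2)]/(z + z') opprD addrACA.
  exact: (ult_add pm3).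
- move=> g d l z Hl [Hz [m [H1 H2]]]; split.
    by rewrite -[(l *: z.1, l *: z.2)]/(l *: z) pm2; have := oleq_add2 Hl Hz; rewrite /= [d + g]addrC.
  exists (fun i => l * m i).
  have -> : \sum_i (l * m i) *: w i = l *: \sum_i m i *: w i.
    by rewrite scaler_sumr; apply: eq_bigr => i _; rewrite scalerA.
  rewrite -[(l *: z.1, l *: z.2)]/(l *: z) -scalerBr !pm2; split.
    by have := oleq_add2 Hl H1; rewrite /= [d + g]addrC.
  by have := oleq_add_lt Hl H2; rewrite [d + g]addrC.
Qed.

Section Quad.
Variables (q : V -> F) (eps : G).
Hypothesis Hq : is_quadratic_form q.
Hypothesis Hca : compatible v q al eps.
Hypothesis Hcb : compatible v q be eps.

Lemma polarC x y : polar q x y = polar q y x.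
Proof. by rewrite /polar [x + y]addrC -!addrA [in LHS](addrC (- q x)). Qed.

Lemma polarDl x y z : polar q (x + y) z = polar q x z + polar q y z.
Proof. by case: Hq => _ []. Qed.

Lemma polarDr x y z : polar q x (y + z) = polar q x y + polar q x z.
Proof. by rewrite polarC polarDl !(polarC x). Qed.

Lemma qD x y : q (x + y) = q x + q y + polar q x y.
Proof. rewrite /polar; ring. Qed.

Lemma pb1 (a : V -> option G) (x y : V) (g d : G) : compatible v q a eps ->
  oleq (Some g) (a x) -> oltn (Some d) (a y) -> oltn (Some (g + d + eps)) (v (polar q x y)).
Proof.
case=> He [Hb _] Hx Hy; apply: oltn_le_trans (Hb x y).
apply: oltn_add; [exact: (oleq_add_lt Hx Hy)|exact: lexx].
Qed.

Lemma pb2 (a : V -> option G) (x y : V) (g d : G) : compatible v q a eps ->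
  oltn (Some g) (a x) -> oleq (Some d) (a y) -> oltn (Some (g + d + eps)) (v (polar q x y)).
Proof. by move=> Hc Hx Hy; rewrite polarC [g + d]addrC; exact: (pb1 Hc Hy Hx). Qed.

Lemma qb (a : V -> option G) (x : V) (g : G) : compatible v q a eps ->
  oltn (Some g) (a x) -> oltn (Some (g + g)) (v (q x)).
Proof.
case=> _ [_ [Hq2 _]] Hx; apply: oltn_le_trans (Hq2 x).
exact: (oltn_add Hx (oltnW Hx)).
Qed.

Lemma pb0 (a : V -> option G) (x y : V) (g : G) : compatible v q a eps ->
  oleq (Some g) (a x) -> oltn (Some g) (a y) -> oltn (Some (g + g)) (v (polar q x y)).
Proof.
move=> Hc Hx Hy; have := pb1 Hc Hx Hy; case: Hc => He _.
move=> H; apply: oleq_lt_trans H; rewrite /= -{1}[g + g]addr0.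
by rewrite [g + g + eps]addrC [(g + g) + 0]addrC leD2r.
Qed.

Lemma Lw_decomp k (t : 'I_k -> V) g z : Lw (fun i => (t i, t i)) g z ->
  exists t0, [/\ oleq (Some g) (al t0), oleq (Some g) (be t0),
    oltn (Some g) (al (z.1 - t0)) & oltn (Some g) (be (z.2 - t0))].
Proof.
case=> _ [l [H1 H2]]; rewrite pair_sum_diag in H1 H2.
exists (\sum_i l i *: t i); move: H1 H2; rewrite /pmu oleq_min oltn_min.
by case/andP=> -> -> /andP[-> ->].
Qed.

Lemma iso1 k (t : 'I_k -> V) g z : Lw (fun i => (t i, t i)) g z ->
  oltn (Some (g + g)) (v (q z.2 - q z.1)).
Proof.
case/Lw_decomp => t0 [Ha Hb Hs Hr].
set s := z.1 - t0; set r := z.2 - t0.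
have -> : z.2 = t0 + r by rewrite /r addrC subrK.
have -> : z.1 = t0 + s by rewrite /s addrC subrK.
rewrite (qD t0 r) (qD t0 s).
have -> : q t0 + q r + polar q t0 r - (q t0 + q s + polar q t0 s) =
   (q r + polar q t0 r) - (q s + polar q t0 s) by ring.
apply: v_ult_sub; apply: v_ult_add.
- exact: qb Hcb Hr.
- exact: pb0 Hcb Hb Hr.
- exact: qb Hca Hs.
- exact: pb0 Hca Ha Hs.
Qed.

Lemma iso2 k (t : 'I_k -> V) g d z z' : Lw (fun i => (t i, t i)) g z ->
  Lw (fun i => (t i, t i)) d z' ->
  oltn (Some (g + d + eps)) (v (polar q z.2 z'.2 - polar q z.1 z'.1)).
Proof.
case/Lw_decomp => t0 [Ha Hb Hs Hr]; case/Lw_decomp => t1 [Ha' Hb' Hs' Hr'].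
set s := z.1 - t0; set r := z.2 - t0; set s' := z'.1 - t1; set r' := z'.2 - t1.
have -> : z.2 = t0 + r by rewrite /r addrC subrK.
have -> : z.1 = t0 + s by rewrite /s addrC subrK.
have -> : z'.2 = t1 + r' by rewrite /r' addrC subrK.
have -> : z'.1 = t1 + s' by rewrite /s' addrC subrK.
rewrite (polarDl t0 r) (polarDl t0 s) (polarDr t0 t1 r') (polarDr r t1 r') (polarDr t0 t1 s') (polarDr s t1 s').
have -> : polar q t0 t1 + polar q t0 r' + (polar q r t1 + polar q r r') -
    (polar q t0 t1 + polar q t0 s' + (polar q s t1 + polar q s s')) =
   (polar q t0 r' + polar q r t1 + polar q r r') -
   (polar q t0 s' + polar q s t1 + polar q s s') by ring.
apply: v_ult_sub; (apply: v_ult_add; [apply: v_ult_add|]).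
- exact: pb1 Hcb Hb Hr'.
- exact: pb2 Hcb Hr Hb'.
- exact: pb1 Hcb (oltnW Hr) Hr'.
- exact: pb1 Hca Ha Hs'.
- exact: pb2 Hca Hs Ha'.
- exact: pb1 Hca (oltnW Hs) Hs'.
Qed.

Lemma main_metabolic : metabolic_diff v al be q eps.
Proof.
have [t [Htnz [Ht _]]] := diag_basis.
pose w := fun i => (t i, t i).
have Hwnz : forall i, w i != 0.
  by move=> i; apply: contraNneq (Htnz i) => /(congr1 fst) /= ->.
exists (Lw w); split; first exact: GS.
split.
  exists n; split.
    have [bb [Hb1 [Hb2 Hb3]]] := pair_basis'.
    apply: (GD Hb3 Hb1) => g z; split.
      move/hom_repE => Hz; split=> //; have [c Hc] := Hb2 z; exists c.
      by rewrite -Hc Hz subrr (proj2 (pm1 0)).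
    by case=> Hz _; apply/hom_repE.
  exact: (GD Hwnz (orth0_diag Ht)).
split.
  move=> g z; exact: iso1.
move=> g d z z'; exact: iso2.
Qed.

End Quad.

End Pair.
End Val.

End Opt.

Theorem lemma4p6 (F : fieldType) (G : porderZmodType) (V : vectType F)
  (v : F -> option G) (q : V -> F) (al be : V -> option G) (eps : G) :
  is_divisible_tot_ord_group G ->
  is_valuation v ->
  is_quadratic_form q ->
  is_vnorm v al -> is_vnorm v be ->
  compatible v q al eps -> compatible v q be eps ->
  witt_equivalent_induced v q al be eps.
Proof.
move=> [Htot [Hadd _]] Hv Hq Hal Hbe Hca Hcb.
exact: (main_metabolic Htot Hadd Hv Hal Hbe Hq Hca Hcb).
Qed.
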